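(* Let $A$ be a set with a ternary operation $p\colon A^3\to A$ and two constants $0,1\in A$ satisfying, for all $a,b,c,b_1,b_2,b_3\in A$: (T1) $p(0,a,1)=a$; (T2) $p(a,b,a)=a$; (T3) $p(a,p(b_1,b_2,b_3),c)=p(p(a,b_1,c),b_2,p(a,b_3,c))$; (T4) $p(a,0,b)=a=p(b,1,a)$. Define $\bar{a}=p(1,a,0)$, $a\cdot b=p(0,a,b)$ and $a+b=p(a,b,\bar a)$. Then the following conditions are equivalent: (i) $(A,+,\cdot,0,1)$ is a unitary ring of characteristic $2$; (ii) $p(a,b,c)=(\bar b\cdot a)+(b\cdot c)$ for all $a,b,c\in A$; (iii) $a\cdot(b+c)=(a\cdot b)+(a\cdot c)$ for all $a,b,c\in A$.
   Context: A unitary ring of characteristic $2$ here means an associative ring with additive identity $0$ and multiplicative identity $1$ (not necessarily commutative) such that $b+b=0$ for all elements $b$. *)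

(* Defs.v *)
Section Ops.
Variables (A : Type) (p : A -> A -> A -> A) (zero one : A).

Definition pbar (a : A) : A := p one a zero.
Definition pmul (a b : A) : A := p zero a b.
Definition padd (a b : A) : A := p a b (pbar a).
End Ops.

Definition is_unitary_ring_char2 {A : Type} (add mul : A -> A -> A) (zero one : A) : Prop :=
  (forall a b c, add a (add b c) = add (add a b) c) /\
  (forall a b, add a b = add b a) /\
  (forall a, add zero a = a) /\
  (forall a, exists b, add a b = zero) /\
  (forall a b c, mul a (mul b c) = mul (mul a b) c) /\
  (forall a, mul one a = a) /\
  (forall a, mul a one = a) /\
  (forall a b c, mul a (add b c) = add (mul a b) (mul a c)) /\
  (forall a b c, mul (add a b) c = add (mul a c) (mul b c)) /\
  (forall b, add b b = zero).

(* Main.v *)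
Require Import Defs.

Theorem theorem2 (A : Type) (p : A -> A -> A -> A) (zero one : A)
  (T1 : forall a, p zero a one = a)
  (T2 : forall a b, p a b a = a)
  (T3 : forall a b1 b2 b3 c,
      p a (p b1 b2 b3) c = p (p a b1 c) b2 (p a b3 c))
  (T4 : forall a b, p a zero b = a /\ p b one a = a) :
  let bar := @pbar A p zero one in
  let mul := @pmul A p zero in
  let add := @padd A p zero one in
  (is_unitary_ring_char2 add mul zero one <->
     (forall a b c, p a b c = add (mul (bar b) a) (mul b c))) /\
  ((forall a b c, p a b c = add (mul (bar b) a) (mul b c)) <->
     (forall a b c, mul a (add b c) = add (mul a b) (mul a c))).
Proof.
  intros bar mul add.
  assert (H0 : forall a b, p a zero b = a) by (intros; apply T4).
  assert (H1 : forall a b, p b one a = a) by (intros; apply T4).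
  assert (Ebar : forall a, bar a = p one a zero) by reflexivity.
  assert (Emul : forall a b, mul a b = p zero a b) by reflexivity.
  assert (Eadd : forall a b, add a b = p a b (bar a)) by reflexivity.
  clearbody bar mul add.
  assert (bb : forall y, bar (bar y) = y).
  { intro y. rewrite !Ebar, T3, H0, H1. apply T1. }
  assert (F1 : forall a y c, p a (bar y) c = p c y a).
  { intros. rewrite Ebar, T3, H0, H1. reflexivity. }
  assert (mulbar : forall x a, mul (bar x) a = p a x zero).
  { intros. rewrite Emul, Ebar, T3, H0, H1. reflexivity. }
  assert (bar0 : bar zero = one) by (rewrite Ebar; apply H0).
  assert (bar1 : bar one = zero) by (rewrite Ebar; apply H1).
  assert (addA : forall a b c, add a (add b c) = add (add a b) c).
  { intros a b c.
    assert (BA : bar (add a b) = add a (bar b)).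
    { rewrite (Ebar (add a b)), (Eadd a b), T3, <- (Ebar (bar a)), <- (Ebar a), bb.
      rewrite (Eadd a (bar b)), F1. reflexivity. }
    rewrite (Eadd a (add b c)), (Eadd b c), T3, <- (Eadd a b), <- (Eadd a (bar b)), <- BA.
    rewrite <- Eadd. reflexivity. }
  assert (add0l : forall c, add zero c = c).
  { intro. rewrite Eadd, bar0. apply T1. }
  assert (add0r : forall c, add c zero = c).
  { intro. rewrite Eadd. apply H0. }
  assert (add1 : forall x, add one x = bar x).
  { intro. rewrite Eadd, bar1, Ebar. reflexivity. }
  assert (G1 : forall a x d, add a (mul x d) = p a x (add a d)).
  { intros. rewrite (Eadd a (mul x d)), Emul, T3, H0, <- Eadd. reflexivity. }
  assert (mulA : forall a b c, mul a (mul b c) = mul (mul a b) c).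
  { intros. rewrite !Emul, T3, H0. reflexivity. }
  assert (mul1l : forall a, mul one a = a) by (intro; rewrite Emul; apply H1).
  assert (mul1r : forall a, mul a one = a) by (intro; rewrite Emul; apply T1).
  assert (Exp : (forall y, add y y = zero) ->
     (forall a b, add a (add a b) = b) /\
     (forall a b, add a b = add b a) /\
     (forall a x c, p a x c = add a (mul x (add a c))) /\
     (forall x a, mul (bar x) a = add a (mul x a))).
  { intro E.
    assert (K : forall a b, add a (add a b) = b).
    { intros. rewrite addA, E. apply add0l. }
    split; [exact K|].
    split.
    { intros a b.
      assert (Z : add (add a b) (add b a) = zero).
      { rewrite <- addA, (addA b b a), E, add0l, E. reflexivity. }
      rewrite <- (K (add a b) (add b a)), Z, add0r. reflexivity. }
    split.
    { intros. rewrite G1, K. reflexivity. }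
    { intros. rewrite mulbar, G1, E. reflexivity. } }
  assert (iii_ii : (forall a b c, mul a (add b c) = add (mul a b) (mul a c)) ->
                   (forall a b c, p a b c = add (mul (bar b) a) (mul b c))).
  { intros D.
    assert (E : forall y, add y y = zero).
    { intro y. rewrite <- (mul1r y), <- D, Eadd, bar1, H1, Emul. apply T2. }
    destruct (Exp E) as (K & C & P & M).
    intros a b c. rewrite P, D, addA, M. reflexivity. }
  assert (ii_E : (forall a b c, p a b c = add (mul (bar b) a) (mul b c)) ->
                 forall y, add y y = zero).
  { intros Hii y.
    assert (Hy : add (bar y) y = one).
    { pose proof (Hii one y one) as Q. rewrite T2, !mul1r in Q. symmetry; exact Q. }
    assert (K1 : forall z, add one (add one z) = z).
    { intro. rewrite !add1. apply bb. }
    rewrite <- add1, <- addA in Hy.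
    rewrite <- (K1 (add y y)), Hy, Eadd, bar1. apply H1. }
  assert (ii_iii : (forall a b c, p a b c = add (mul (bar b) a) (mul b c)) ->
                   (forall a b c, mul a (add b c) = add (mul a b) (mul a c))).
  { intros Hii. pose proof (ii_E Hii) as E.
    destruct (Exp E) as (K & C & P & M).
    intros x a c.
    pose proof (Hii a x c) as Q. rewrite P, M, <- addA in Q.
    rewrite <- (K a (mul x (add a c))), Q, K. reflexivity. }
  split; [split|split; assumption].
  - intros R. apply iii_ii. apply R.
  - intros Hii. pose proof (ii_E Hii) as E.
    destruct (Exp E) as (K & C & P & M).
    pose proof (ii_iii Hii) as D.
    unfold is_unitary_ring_char2.
    split; [exact addA|]. split; [exact C|]. split; [exact add0l|].
    split; [intro a; exists a; apply E|]. split; [exact mulA|].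
    split; [exact mul1l|]. split; [exact mul1r|]. split; [exact D|].
    split; [|exact E].
    intros a b c.
    rewrite (Eadd a b), (Emul (p a b (bar a)) c), T3, <- (Emul a c), <- (Emul (bar a) c).
    rewrite P, (M a c), (C c (mul a c)), K. reflexivity.
Qed.
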